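(* Let $\gamma$ denote the Euler–Mascheroni constant. Define $a_1=\frac12$, $a_2=\frac16$, $a_3=-\frac16$, $a_4=\frac35$, $a_5=-\frac35$, $a_6=\frac{79}{126}$, $a_7=-\frac{79}{126}$, $a_8=\frac{7230}{6241}$, $a_9=-\frac{7230}{6241}$, $a_{10}=\frac{4146631}{3833346}$, $a_{11}=-\frac{4146631}{3833346}$. For a positive integer $n$ and $k\in\{10,11\}$ define the finite continued fraction $$R_k(n)=\cfrac{a_1}{n+\cfrac{a_2 n}{n+\cfrac{a_3 n}{n+\cfrac{\ddots}{n+\cfrac{a_{k-1}n}{n+a_k}}}}},$$ i.e. $R_k(n)=a_1/T_2$ where $T_k=n+a_k$ and $T_j=n+\frac{a_j n}{T_{j+1}}$ for $2\le j\le k-1$, and let $r_k(n)=\sum_{m=1}^{n}\frac1m-\ln n-R_k(n)$. Put $C_{10}=-\frac{2755095121}{892586949408}$ and $C_{11}=\frac{20169451}{3821257440}$. Then for every positive integer $n$, $$-C_{10}\,\frac{1}{(n+1)^{11}}<\gamma-r_{10}(n)<-C_{10}\,\frac{1}{n^{11}},$$ $$C_{11}\,\frac{1}{(n+1)^{12}}<r_{11}(n)-\gamma<C_{11}\,\frac{1}{n^{12}}.$$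
   Context: $\gamma=\lim_{n\to\infty}\left(\sum_{m=1}^{n}\frac1m-\ln n\right)$ is the Euler–Mascheroni constant. The constants $C_{10},C_{11}$ are the limits $\lim_{n\to\infty}n^{k+1}(r_k(n)-\gamma)$ for $k=10,11$. *)

(* Defs.v *)
From Stdlib Require Import Reals.
From Coquelicot Require Import Coquelicot.
Open Scope R_scope.

Definition harmonic (n : nat) : R := sum_n_m (fun m => / INR m) 1 n.

Definition euler_gamma : R := real (Lim_seq (fun n => harmonic n - ln (INR n))).

(* coefficients a_1..a_11 (a_j for other j is irrelevant, set to 0) *)
Definition acoef (j : nat) : R :=
  match j with
  | 1 => 1/2
  | 2 => 1/6
  | 3 => -(1/6)
  | 4 => 3/5
  | 5 => -(3/5)
  | 6 => 79/126
  | 7 => -(79/126)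
  | 8 => 7230/6241
  | 9 => -(7230/6241)
  | 10 => 4146631/3833346
  | 11 => -(4146631/3833346)
  | _ => 0
  end.

(* Tfrom x j m = T_j when k = j + m:
   T_k = x + a_k,  T_j = x + a_j x / T_{j+1}. *)
Fixpoint Tfrom (x : R) (j m : nat) : R :=
  match m with
  | O => x + acoef j
  | S m' => x + acoef j * x / Tfrom x (S j) m'
  end.

Definition Rk (k n : nat) : R := acoef 1 / Tfrom (INR n) 2 (k - 2).

Definition rk (k n : nat) : R := harmonic n - ln (INR n) - Rk k n.

Definition C10 : R := -(2755095121 / 892586949408).
Definition C11 : R := 20169451 / 3821257440.

(* Main.v *)
Require Import Defs.
From Stdlib Require Import Reals.
From Coquelicot Require Import Coquelicot.
Open Scope R_scope.
From Stdlib Require Import Reals Lra Lia ZArith List.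
From Coquelicot Require Import Coquelicot.
Import ListNotations.
Open Scope R_scope.

Fixpoint peval (l : list Z) (x : R) : R :=
  match l with nil => 0 | c :: l' => IZR c + x * peval l' x end.

Fixpoint padd (l1 l2 : list Z) : list Z :=
  match l1, l2 with
  | nil, _ => l2
  | _, nil => l1
  | a :: l1', b :: l2' => (a + b)%Z :: padd l1' l2'
  end.

Definition pscal (c : Z) (l : list Z) : list Z := map (Z.mul c) l.

Fixpoint pmul (l1 l2 : list Z) : list Z :=
  match l1 with
  | nil => nil
  | a :: l1' => padd (pscal a l2) (0%Z :: pmul l1' l2)
  end.

Fixpoint ppow (l : list Z) (n : nat) : list Z :=
  match n with O => [1%Z] | S n' => pmul l (ppow l n') end.

Fixpoint pcomp (l q : list Z) : list Z :=
  match l with nil => nil | c :: l' => padd [c] (pmul q (pcomp l' q)) end.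

Definition pshift (l : list Z) := pcomp l [1%Z; 1%Z].

Fixpoint pder (l : list Z) : list Z :=
  match l with nil => nil | _ :: l' => padd l' (0%Z :: pder l') end.

Definition psub l1 l2 := padd l1 (pscal (-1) l2).

Definition pos_check (l : list Z) : bool :=
  match l with nil => false | c :: l' => Z.ltb 0 c && forallb (Z.leb 0) l' end.
Definition nn_check (l : list Z) : bool := forallb (Z.leb 0) l.

Lemma peval_padd l1 l2 x : peval (padd l1 l2) x = peval l1 x + peval l2 x.
Proof.
  revert l2; induction l1 as [|a l1 IH]; intros [|b l2]; simpl; try ring.
  rewrite IH, plus_IZR; ring.
Qed.

Lemma peval_pscal c l x : peval (pscal c l) x = IZR c * peval l x.
Proof.
  induction l as [|a l IH]; simpl; [ring|]. rewrite IH, mult_IZR; ring.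
Qed.

Lemma peval_pmul l1 l2 x : peval (pmul l1 l2) x = peval l1 x * peval l2 x.
Proof.
  induction l1 as [|a l1 IH]; cbn [pmul peval]; [ring|].
  rewrite peval_padd, peval_pscal; cbn [peval]; rewrite IH; ring.
Qed.

Lemma peval_ppow l n x : peval (ppow l n) x = peval l x ^ n.
Proof.
  induction n as [|n IH]; cbn [ppow peval pow]; [ring|]. rewrite peval_pmul, IH; ring.
Qed.

Lemma peval_pcomp l q x : peval (pcomp l q) x = peval l (peval q x).
Proof.
  induction l as [|a l IH]; cbn [pcomp peval]; [ring|].
  rewrite peval_padd, peval_pmul, IH; cbn [peval]; ring.
Qed.

Lemma peval_pshift l x : peval (pshift l) x = peval l (1 + x).
Proof. unfold pshift; rewrite peval_pcomp; simpl; f_equal; ring. Qed.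

Lemma peval_psub l1 l2 x : peval (psub l1 l2) x = peval l1 x - peval l2 x.
Proof. unfold psub; rewrite peval_padd, peval_pscal; ring. Qed.

Lemma peval_lin a b x : peval [a; b] x = IZR a + IZR b * x.
Proof. simpl; ring. Qed.

Lemma peval_der l x : is_derive (peval l) x (peval (pder l) x).
Proof.
  apply is_derive_Reals.
  induction l as [|a l IH]; cbn [pder].
  - apply (derivable_pt_lim_const 0).
  - rewrite peval_padd; cbn [peval].
    replace (peval l x + (0 + x * peval (pder l) x)) with
      (0 + (1 * peval l x + x * peval (pder l) x)) by ring.
    apply (derivable_pt_lim_plus (fun _ => IZR a) (fun y => y * peval l y)).
    + apply derivable_pt_lim_const.
    + apply (derivable_pt_lim_mult (fun y => y) (peval l)); [apply derivable_pt_lim_id|exact IH].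
Qed.

Lemma nn_check_ok l t : nn_check l = true -> 0 <= t -> 0 <= peval l t.
Proof.
  induction l as [|a l IH]; simpl; [lra|].
  intros H Ht; apply andb_prop in H; destruct H as [H1 H2].
  apply Z.leb_le, IZR_le in H1. specialize (IH H2 Ht).
  assert (0 <= t * peval l t) by (apply Rmult_le_pos; auto). lra.
Qed.

Lemma pos_check_ok l t : pos_check l = true -> 0 <= t -> 0 < peval l t.
Proof.
  destruct l as [|a l]; simpl; [discriminate|].
  intros H Ht; apply andb_prop in H; destruct H as [H1 H2].
  apply Z.ltb_lt, IZR_lt in H1. 
  assert (0 <= peval l t) by (apply nn_check_ok; auto).
  assert (0 <= t * peval l t) by (apply Rmult_le_pos; auto). lra.
Qed.

Lemma pos_shift l x : pos_check (pshift l) = true -> 1 <= x -> 0 < peval l x.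
Proof.
  intros H Hx. replace x with (1 + (x - 1)) by ring. rewrite <- peval_pshift.
  apply pos_check_ok; auto; lra.
Qed.

Lemma nn_shift l x : nn_check (pshift l) = true -> 1 <= x -> 0 <= peval l x.
Proof.
  intros H Hx. replace x with (1 + (x - 1)) by ring. rewrite <- peval_pshift.
  apply nn_check_ok; auto; lra.
Qed.
Definition ratder l m := psub (pmul (pder l) m) (pmul l (pder m)).

Lemma der_G0 x : 0 < x ->
  derivable_pt_lim (fun y => / (y + 1) - ln (y + 1) + ln y) x (/ (x * (x + 1) ^ 2)).
Proof.
  intros Hx. apply is_derive_Reals. auto_derive.
  - repeat split; lra.
  - field; lra.
Qed.

Lemma der_pinv (a : R) p x : 0 < x + a ->
  derivable_pt_lim (fun y => / (y + a) ^ p) x (- INR p / (x + a) ^ (S p)).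
Proof.
  intros Hx. apply is_derive_Reals. auto_derive.
  - apply pow_nonzero; lra.
  - destruct p as [|p].
    + simpl; field; lra.
    + replace (S p - 1)%nat with p by lia.
      assert ((x + a) ^ p <> 0) by (apply pow_nonzero; lra).
      simpl. field; split; lra || auto.
Qed.

Lemma der_rat l m x : peval m x <> 0 ->
  derivable_pt_lim (fun y => peval l y / peval m y) x (peval (ratder l m) x / peval (pmul m m) x).
Proof.
  intros Hm.
  change (fun y => peval l y / peval m y) with (div_fct (peval l) (peval m)).
  replace (peval (ratder l m) x / peval (pmul m m) x) with
    ((peval (pder l) x * peval m x - peval (pder m) x * peval l x) / (peval m x)²).
  - apply derivable_pt_lim_div; auto; apply is_derive_Reals; apply peval_der.
  - unfold ratder, Rsqr; rewrite peval_psub, !peval_pmul; field; auto.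
Qed.

Definition Fgen (P Q : list Z) (K s : R) (p : nat) (x : R) : R :=
  / (x + 1) - ln (x + 1) + ln x - peval (pshift P) x / peval (pshift Q) x + peval P x / peval Q x
  + K * (/ (x + s) ^ p - / (x + s + 1) ^ p).

Definition dFgen (P Q : list Z) (K s : R) (p : nat) (x : R) : R :=
  / (x * (x + 1) ^ 2) - peval (ratder (pshift P) (pshift Q)) x / peval (pmul (pshift Q) (pshift Q)) x
  + peval (ratder P Q) x / peval (pmul Q Q) x
  + K * (- INR p / (x + s) ^ (S p) - - INR p / (x + s + 1) ^ (S p)).

Lemma der_Fgen P Q K s p x : 0 < x -> 0 <= s -> peval Q x <> 0 -> peval (pshift Q) x <> 0 ->
  derivable_pt_lim (Fgen P Q K s p) x (dFgen P Q K s p x).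
Proof.
  intros Hx Hs HQ HQ1. unfold Fgen, dFgen.
  apply (derivable_pt_lim_plus
    (fun y => / (y + 1) - ln (y + 1) + ln y - peval (pshift P) y / peval (pshift Q) y + peval P y / peval Q y)
    (fun y => K * (/ (y + s) ^ p - / (y + s + 1) ^ p))).
  - apply (derivable_pt_lim_plus
      (fun y => / (y + 1) - ln (y + 1) + ln y - peval (pshift P) y / peval (pshift Q) y)
      (fun y => peval P y / peval Q y)).
    + apply (derivable_pt_lim_minus (fun y => / (y + 1) - ln (y + 1) + ln y)
         (fun y => peval (pshift P) y / peval (pshift Q) y)).
      * apply der_G0; auto.
      * apply der_rat; auto.
    + apply der_rat; auto.
  - apply (derivable_pt_lim_scal (fun y => / (y + s) ^ p - / (y + s + 1) ^ p)).
    apply (derivable_pt_lim_minus (fun y => / (y + s) ^ p) (fun y => / (y + s + 1) ^ p)).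
    + apply der_pinv; lra.
    + replace (x + s + 1) with (x + (s + 1)) by ring.
      apply is_derive_Reals.
      apply (is_derive_ext (fun y => / (y + (s + 1)) ^ p)).
      * intros t; f_equal; f_equal; ring.
      * apply is_derive_Reals, (der_pinv (s + 1) p x); lra.
Qed.
Definition dd1 := [0%Z; 1%Z; 2%Z; 1%Z].
Definition n2 P Q := pscal (-1) (ratder (pshift P) (pshift Q)).
Definition d2 (Q : list Z) := pmul (pshift Q) (pshift Q).
Definition n3 P Q := ratder P Q.
Definition d3 (Q : list Z) := pmul Q Q.
Definition n4 (Kn : Z) (p : nat) := [(- (Kn * Z.of_nat p))%Z].
Definition d4 (Kd s : Z) p := pscal Kd (ppow [s; 1%Z] (S p)).
Definition n5 (Kn : Z) (p : nat) := [(Kn * Z.of_nat p)%Z].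
Definition d5 (Kd s : Z) p := pscal Kd (ppow [(s + 1)%Z; 1%Z] (S p)).
Definition Den Q Kd s p := pmul dd1 (pmul (d2 Q) (pmul (d3 Q) (pmul (d4 Kd s p) (d5 Kd s p)))).
Definition Num P Q Kn Kd s p :=
  padd (pmul (d2 Q) (pmul (d3 Q) (pmul (d4 Kd s p) (d5 Kd s p))))
  (padd (pmul dd1 (pmul (n2 P Q) (pmul (d3 Q) (pmul (d4 Kd s p) (d5 Kd s p)))))
  (padd (pmul dd1 (pmul (d2 Q) (pmul (n3 P Q) (pmul (d4 Kd s p) (d5 Kd s p)))))
  (padd (pmul dd1 (pmul (d2 Q) (pmul (d3 Q) (pmul (n4 Kn p) (d5 Kd s p)))))
        (pmul dd1 (pmul (d2 Q) (pmul (d3 Q) (pmul (d4 Kd s p) (n5 Kn p)))))))).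

Lemma peval_const c x : peval [c] x = IZR c.
Proof. simpl; ring. Qed.
Lemma peval_dd1 x : peval dd1 x = x * (x + 1) ^ 2.
Proof. unfold dd1; simpl; ring. Qed.

Lemma dFgen_val P Q Kn Kd s p x : 0 < x -> (0 <= s)%Z -> (0 < Kd)%Z ->
  peval Q x <> 0 -> peval (pshift Q) x <> 0 ->
  dFgen P Q (IZR Kn / IZR Kd) (IZR s) p x = peval (Num P Q Kn Kd s p) x / peval (Den Q Kd s p) x.
Proof.
  intros Hx Hs HKd HQ HQ1.
  apply IZR_le in Hs. apply IZR_lt in HKd.
  unfold Num, Den, n2, d2, n3, d3, n4, d4, n5, d5, dFgen.
  rewrite !peval_padd, !peval_pmul, !peval_pscal, !peval_ppow, !peval_lin, !peval_const, !peval_dd1.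
  rewrite !opp_IZR, !mult_IZR, plus_IZR, <- INR_IZR_INZ.
  replace (IZR s + IZR 1 * x) with (x + IZR s) by (simpl; ring).
  replace (IZR s + IZR 1 + IZR 1 * x) with (x + IZR s + 1) by (simpl; ring).
  assert ((x + IZR s) ^ S p <> 0) by (apply pow_nonzero; lra).
  assert ((x + IZR s + 1) ^ S p <> 0) by (apply pow_nonzero; lra).
  field. repeat split; auto; lra.
Qed.

Lemma ln_diff_bound x : 1 <= x -> 0 < ln (x + 1) - ln x <= / x.
Proof.
  intros Hx. split.
  - assert (ln x < ln (x + 1)) by (apply ln_increasing; lra). lra.
  - assert (E : ln (x + 1) - ln x = ln ((x + 1) * / x)).
    { rewrite ln_mult, ln_Rinv; try lra. apply Rinv_0_lt_compat; lra. }
    rewrite E. pose proof (exp_ineq1_le (ln ((x + 1) * / x))).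
    rewrite exp_ln in H. 2:{ apply Rmult_lt_0_compat; [lra|apply Rinv_0_lt_compat; lra]. }
    assert ((x + 1) * / x = 1 + / x) by (field; lra). lra.
Qed.

Lemma rat_bound P Q y : 1 <= y -> nn_check (pshift P) = true -> pos_check (pshift Q) = true ->
  nn_check (pshift (psub Q (pmul [0%Z; 1%Z] P))) = true ->
  0 <= peval P y / peval Q y <= / y.
Proof.
  intros Hy HP HQ HPQ.
  pose proof (nn_shift _ _ HP Hy). pose proof (pos_shift _ _ HQ Hy).
  pose proof (nn_shift _ _ HPQ Hy). rewrite peval_psub, peval_pmul, peval_lin in H1.
  split.
  - apply Rmult_le_pos; auto. left; apply Rinv_0_lt_compat; auto.
  - apply (Rmult_le_reg_r (peval Q y * y)). { apply Rmult_lt_0_compat; lra. }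
    replace (peval P y / peval Q y * (peval Q y * y)) with (peval P y * y) by (field; lra).
    replace (/ y * (peval Q y * y)) with (peval Q y) by (field; lra).
    simpl in H1. lra.
Qed.

Lemma pinv_bound a p x : 1 <= x -> 0 <= a -> (1 <= p)%nat -> 0 < / (x + a) ^ p <= / x.
Proof.
  intros Hx Ha Hp. split.
  - apply Rinv_0_lt_compat, pow_lt; lra.
  - apply Rinv_le_contravar; [lra|].
    apply Rle_trans with ((x + a) ^ 1); [simpl; lra|]. apply Rle_pow; auto; lra.
Qed.

Lemma Fgen_bound P Q K s p x : 1 <= x -> 0 <= s -> (1 <= p)%nat -> Rabs K <= 1 ->
  nn_check (pshift P) = true -> pos_check (pshift Q) = true ->
  nn_check (pshift (psub Q (pmul [0%Z; 1%Z] P))) = true ->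
  - (5 / x) <= Fgen P Q K s p x <= 5 / x.
Proof.
  intros Hx Hs Hp HK HP HQ HPQ. unfold Fgen.
  pose proof (ln_diff_bound x Hx) as L.
  pose proof (rat_bound P Q x Hx HP HQ HPQ) as R0.
  pose proof (rat_bound P Q (1 + x) ltac:(lra) HP HQ HPQ) as R1.
  rewrite <- !peval_pshift in R1.
  assert (/ (1 + x) <= / x) by (apply Rinv_le_contravar; lra).
  assert (0 < / (x + 1) <= / x) by (split; [apply Rinv_0_lt_compat; lra| apply Rinv_le_contravar; lra]).
  pose proof (pinv_bound s p x Hx Hs Hp) as A.
  pose proof (pinv_bound (s + 1) p x Hx ltac:(lra) Hp) as B.
  replace (x + (s + 1)) with (x + s + 1) in B by ring.
  set (A0 := / (x + s) ^ p) in *. set (B0 := / (x + s + 1) ^ p) in *.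
  assert (Rabs (K * (A0 - B0)) <= / x).
  { rewrite Rabs_mult. apply Rle_trans with (1 * Rabs (A0 - B0)).
    - apply Rmult_le_compat_r; [apply Rabs_pos|auto].
    - rewrite Rmult_1_l. apply Rabs_le; lra. }
  apply Rabs_le_between in H1.
  replace (5 / x) with (5 * / x) by (unfold Rdiv; ring). lra.
Qed.

Lemma pos_of_der (f df : R -> R) M : 0 <= M ->
  (forall x, 1 <= x -> derivable_pt_lim f x (df x)) -> (forall x, 1 <= x -> df x < 0) ->
  (forall x, 1 <= x -> - (M / x) <= f x) -> forall x, 1 <= x -> 0 < f x.
Proof.
  intros HM Hd Hneg Hb.
  assert (dec : forall a b, 1 <= a -> a < b -> f b < f a).
  { intros a b Ha Hab. destruct (MVT_cor2 f df a b Hab) as [c [Hc1 Hc2]].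
    - intros c Hc; apply Hd; lra.
    - assert (df c < 0) by (apply Hneg; lra).
      assert (df c * (b - a) < 0) by (apply Rmult_neg_pos; lra). lra. }
  intros x Hx.
  assert (0 <= f (x + 1)).
  { destruct (Rle_or_lt 0 (f (x + 1))) as [h|h]; auto. exfalso.
    set (e := - f (x + 1)). assert (He : 0 < e) by (unfold e; lra).
    set (y := x + 2 + M / e).
    assert (0 <= M / e) by (apply Rmult_le_pos; [lra| left; apply Rinv_0_lt_compat; lra]).
    assert (f y < f (x + 1)) by (apply dec; unfold y; lra).
    pose proof (Hb y ltac:(unfold y; lra)).
    assert (M / y < e).
    { apply (Rmult_lt_reg_r y); [unfold y; lra|].
      replace (M / y * y) with M by (field; unfold y; lra).
      unfold y. replace (e * (x + 2 + M / e)) with (e * (x + 2) + M) by (field; lra).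
      assert (0 < e * (x + 2)) by (apply Rmult_lt_0_compat; lra). lra. }
    unfold e in *. lra. }
  assert (f (x + 1) < f x) by (apply dec; lra). lra.
Qed.

Lemma Fgen_pos P Q Kn Kd s p :
  pos_check (pshift Q) = true -> pos_check (pshift (Den Q Kd s p)) = true ->
  pos_check (pshift (pscal (-1) (Num P Q Kn Kd s p))) = true ->
  nn_check (pshift P) = true -> nn_check (pshift (psub Q (pmul [0%Z; 1%Z] P))) = true ->
  (0 <= s)%Z -> (0 < Kd)%Z -> (Z.abs Kn <= Kd)%Z -> (1 <= p)%nat ->
  forall x, 1 <= x -> 0 < Fgen P Q (IZR Kn / IZR Kd) (IZR s) p x.
Proof.
  intros HQ HD HN HP HPQ Hs HKd HK Hp.
  assert (HK' : Rabs (IZR Kn / IZR Kd) <= 1).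
  { apply IZR_lt in HKd. rewrite Rabs_div by lra. rewrite Rabs_Zabs, (Rabs_right (IZR Kd)) by lra.
    apply IZR_le in HK. apply (Rmult_le_reg_r (IZR Kd)); auto. field_simplify; lra. }
  assert (Hs' := IZR_le _ _ Hs).
  intros x0 Hx0.
  apply (pos_of_der _ (dFgen P Q (IZR Kn / IZR Kd) (IZR s) p) 5); [lra| | | |auto].
  - intros x Hx. apply der_Fgen; try lra.
    + apply Rgt_not_eq, pos_shift; auto.
    + rewrite peval_pshift; apply Rgt_not_eq, pos_shift; auto; lra.
  - intros x Hx.
    assert (0 < peval Q x) by (apply pos_shift; auto).
    assert (0 < peval (pshift Q) x) by (rewrite peval_pshift; apply pos_shift; auto; lra).
    rewrite dFgen_val; [| lra | auto | auto | lra | lra].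
    pose proof (pos_shift _ _ HD Hx). pose proof (pos_shift _ _ HN Hx).
    rewrite peval_pscal in H2.
    assert (peval (Num P Q Kn Kd s p) x / peval (Den Q Kd s p) x < 0).
    { unfold Rdiv. apply Rmult_neg_pos; [simpl in H2; lra| apply Rinv_0_lt_compat; auto]. }
    auto.
  - intros y Hy. apply Fgen_bound; auto.
Qed.

Lemma Fgen_neg P Q Kn Kd s p :
  pos_check (pshift Q) = true -> pos_check (pshift (Den Q Kd s p)) = true ->
  pos_check (pshift (Num P Q Kn Kd s p)) = true ->
  nn_check (pshift P) = true -> nn_check (pshift (psub Q (pmul [0%Z; 1%Z] P))) = true ->
  (0 <= s)%Z -> (0 < Kd)%Z -> (Z.abs Kn <= Kd)%Z -> (1 <= p)%nat ->
  forall x, 1 <= x -> Fgen P Q (IZR Kn / IZR Kd) (IZR s) p x < 0.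
Proof.
  intros HQ HD HN HP HPQ Hs HKd HK Hp.
  assert (HK' : Rabs (IZR Kn / IZR Kd) <= 1).
  { apply IZR_lt in HKd. rewrite Rabs_div by lra. rewrite Rabs_Zabs, (Rabs_right (IZR Kd)) by lra.
    apply IZR_le in HK. apply (Rmult_le_reg_r (IZR Kd)); auto. field_simplify; lra. }
  assert (Hs' := IZR_le _ _ Hs).
  intros x0 Hx0.
  cut (0 < - Fgen P Q (IZR Kn / IZR Kd) (IZR s) p x0); [lra|].
  apply (pos_of_der (fun x => - Fgen P Q (IZR Kn / IZR Kd) (IZR s) p x)
           (fun x => - dFgen P Q (IZR Kn / IZR Kd) (IZR s) p x) 5); [lra| | | |auto].
  - intros x Hx. apply derivable_pt_lim_opp. apply der_Fgen; try lra.
    + apply Rgt_not_eq, pos_shift; auto.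
    + rewrite peval_pshift; apply Rgt_not_eq, pos_shift; auto; lra.
  - intros x Hx.
    assert (0 < peval Q x) by (apply pos_shift; auto).
    assert (0 < peval (pshift Q) x) by (rewrite peval_pshift; apply pos_shift; auto; lra).
    rewrite dFgen_val; [| lra | auto | auto | lra | lra].
    pose proof (pos_shift _ _ HD Hx). pose proof (pos_shift _ _ HN Hx).
    assert (0 < peval (Num P Q Kn Kd s p) x / peval (Den Q Kd s p) x).
    { unfold Rdiv. apply Rmult_lt_0_compat; [lra| apply Rinv_0_lt_compat; auto]. }
    lra.
  - intros x Hx. pose proof (Fgen_bound P Q (IZR Kn / IZR Kd) (IZR s) p x Hx Hs' Hp HK' HP HQ HPQ); lra.
Qed.
Definition P10 := [757663907%Z; 1462202322%Z; 3663389030%Z; 1473250800%Z; 1610005320%Z].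
Definition Q10 := [252996980%Z; 2155378680%Z; 4188622200%Z; 7907306400%Z; 3483170040%Z; 3220010640%Z].
Definition N10_2 := [0%Z; 0%Z; 0%Z; 0%Z; 12649849%Z; 107768934%Z; 209431110%Z; 395365320%Z; 174158502%Z; 161000532%Z].
Definition d10_2 := 161000532%Z.
Definition N10_3 := [0%Z; 0%Z; 0%Z; 0%Z; 108237701%Z; 208886046%Z; 523341290%Z; 210464400%Z; 230000760%Z].
Definition d10_3 := 230000760%Z.
Definition N10_4 := [0%Z; 0%Z; 0%Z; 126498490%Z; 320025433%Z; 632108778%Z; 290264170%Z; 268334220%Z].
Definition d10_4 := 268334220%Z.
Definition N10_5 := [0%Z; 0%Z; 0%Z; 1327033%Z; 457950276%Z; 129263638%Z; 268334220%Z].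
Definition d10_5 := 268334220%Z.
Definition N10_6 := [0%Z; 0%Z; 63249245%Z; 159349200%Z; 87079251%Z; 80500266%Z].
Definition d10_6 := 80500266%Z.
Definition N10_7 := [0%Z; 0%Z; 628511351%Z; 219641172%Z; 483001596%Z].
Definition d10_7 := 483001596%Z.
Definition N10_8 := [0%Z; 379495470%Z; 327583849%Z; 302834334%Z].
Definition d10_8 := 302834334%Z.
Definition N10_9 := [0%Z; (-1835967509)%Z; 23923912386%Z].
Definition d10_9 := 23923912386%Z.
Definition N10_10 := [4146631%Z; 3833346%Z].
Definition d10_10 := 3833346%Z.
Definition P11 := [(-262445)%Z; 2235870%Z; (-1311429)%Z; 8202600%Z; (-556710)%Z; 3340260%Z].
Definition Q11 := [0%Z; 0%Z; 4471740%Z; 0%Z; 16405200%Z; 0%Z; 6680520%Z].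
Definition N11_2 := [0%Z; 0%Z; 0%Z; 0%Z; 0%Z; 0%Z; 3549%Z; 0%Z; 13020%Z; 0%Z; 5302%Z].
Definition d11_2 := 5302%Z.
Definition N11_3 := [0%Z; 0%Z; 0%Z; 0%Z; (-262445)%Z; 2235870%Z; (-1311429)%Z; 8202600%Z; (-556710)%Z; 3340260%Z].
Definition d11_3 := 3340260%Z.
Definition N11_4 := [0%Z; 0%Z; 0%Z; 0%Z; 262445%Z; 0%Z; 1311429%Z; 0%Z; 556710%Z].
Definition d11_4 := 556710%Z.
Definition N11_5 := [0%Z; 0%Z; 0%Z; 262445%Z; (-661200)%Z; 1311429%Z; (-334026)%Z; 556710%Z].
Definition d11_5 := 556710%Z.
Definition N11_6 := [0%Z; 0%Z; 0%Z; 0%Z; 110200%Z; 0%Z; 55671%Z].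
Definition d11_6 := 55671%Z.
Definition N11_7 := [0%Z; 0%Z; (-262445)%Z; 661200%Z; (-209429)%Z; 334026%Z].
Definition d11_7 := 334026%Z.
Definition N11_8 := [0%Z; 0%Z; 262445%Z; 0%Z; 209429%Z].
Definition d11_8 := 209429%Z.
Definition N11_9 := [0%Z; 20733155%Z; (-19166730)%Z; 16544891%Z].
Definition d11_9 := 16544891%Z.
Definition N11_10 := [0%Z; 0%Z; 1%Z].
Definition d11_10 := 1%Z.
Definition N11_11 := [(-4146631)%Z; 3833346%Z].
Definition d11_11 := 3833346%Z.

Fixpoint cont (x : R) (j m : nat) : R * R :=
  match m with
  | O => (x + acoef j, 1)
  | S m' => (x * fst (cont x (S j) m') + acoef j * x * snd (cont x (S j) m'), fst (cont x (S j) m'))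
  end.

Fixpoint ok (x : R) (j m : nat) : Prop :=
  match m with O => True | S m' => fst (cont x (S j) m') <> 0 /\ ok x (S j) m' end.

Lemma snd_nz x j m : ok x j m -> snd (cont x j m) <> 0.
Proof. destruct m; simpl; [intros; lra| tauto]. Qed.

Lemma T_cont x m : forall j, ok x j m -> Tfrom x j m = fst (cont x j m) / snd (cont x j m).
Proof.
  induction m as [|m IH]; intros j H; simpl.
  - field.
  - destruct H as [H1 H2]. rewrite (IH _ H2). pose proof (snd_nz _ _ _ H2).
    field; auto.
Qed.

Lemma cont10_2 x : fst (cont x 2 8) = peval N10_2 x / IZR d10_2.
Proof. cbn [cont fst snd acoef]; unfold N10_2, d10_2; cbn [peval]; field. Qed.
Lemma cont10_3 x : fst (cont x 3 7) = peval N10_3 x / IZR d10_3.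
Proof. cbn [cont fst snd acoef]; unfold N10_3, d10_3; cbn [peval]; field. Qed.
Lemma cont10_4 x : fst (cont x 4 6) = peval N10_4 x / IZR d10_4.
Proof. cbn [cont fst snd acoef]; unfold N10_4, d10_4; cbn [peval]; field. Qed.
Lemma cont10_5 x : fst (cont x 5 5) = peval N10_5 x / IZR d10_5.
Proof. cbn [cont fst snd acoef]; unfold N10_5, d10_5; cbn [peval]; field. Qed.
Lemma cont10_6 x : fst (cont x 6 4) = peval N10_6 x / IZR d10_6.
Proof. cbn [cont fst snd acoef]; unfold N10_6, d10_6; cbn [peval]; field. Qed.
Lemma cont10_7 x : fst (cont x 7 3) = peval N10_7 x / IZR d10_7.
Proof. cbn [cont fst snd acoef]; unfold N10_7, d10_7; cbn [peval]; field. Qed.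
Lemma cont10_8 x : fst (cont x 8 2) = peval N10_8 x / IZR d10_8.
Proof. cbn [cont fst snd acoef]; unfold N10_8, d10_8; cbn [peval]; field. Qed.
Lemma cont10_9 x : fst (cont x 9 1) = peval N10_9 x / IZR d10_9.
Proof. cbn [cont fst snd acoef]; unfold N10_9, d10_9; cbn [peval]; field. Qed.
Lemma cont10_10 x : fst (cont x 10 0) = peval N10_10 x / IZR d10_10.
Proof. cbn [cont fst snd acoef]; unfold N10_10, d10_10; cbn [peval]; field. Qed.
Lemma polyid10 : pmul P10 (pscal (2 * d10_3) N10_2) = pmul Q10 (pscal d10_2 N10_3).
Proof. vm_compute; reflexivity. Qed.
Lemma Rk10_eq n : (1 <= n)%nat -> Rk 10 n = peval P10 (INR n) / peval Q10 (INR n).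
Proof.
  intros Hn. assert (Hx : 1 <= INR n) by (apply (le_INR 1); auto).
  assert (HQ : 0 < peval Q10 (INR n)) by (apply pos_shift; [vm_compute; reflexivity| auto]).
  unfold Rk. replace (10 - 2)%nat with 8%nat by reflexivity.
  assert (Hok : ok (INR n) 2 8).
  { cbn [ok]. repeat split.
    - rewrite cont10_3. apply Rgt_not_eq, Rdiv_lt_0_compat; [apply pos_shift; [vm_compute; reflexivity| auto]| apply IZR_lt; reflexivity].
    - rewrite cont10_4. apply Rgt_not_eq, Rdiv_lt_0_compat; [apply pos_shift; [vm_compute; reflexivity| auto]| apply IZR_lt; reflexivity].
    - rewrite cont10_5. apply Rgt_not_eq, Rdiv_lt_0_compat; [apply pos_shift; [vm_compute; reflexivity| auto]| apply IZR_lt; reflexivity].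
    - rewrite cont10_6. apply Rgt_not_eq, Rdiv_lt_0_compat; [apply pos_shift; [vm_compute; reflexivity| auto]| apply IZR_lt; reflexivity].
    - rewrite cont10_7. apply Rgt_not_eq, Rdiv_lt_0_compat; [apply pos_shift; [vm_compute; reflexivity| auto]| apply IZR_lt; reflexivity].
    - rewrite cont10_8. apply Rgt_not_eq, Rdiv_lt_0_compat; [apply pos_shift; [vm_compute; reflexivity| auto]| apply IZR_lt; reflexivity].
    - rewrite cont10_9. apply Rgt_not_eq, Rdiv_lt_0_compat; [apply pos_shift; [vm_compute; reflexivity| auto]| apply IZR_lt; reflexivity].
    - rewrite cont10_10. apply Rgt_not_eq, Rdiv_lt_0_compat; [apply pos_shift; [vm_compute; reflexivity| auto]| apply IZR_lt; reflexivity].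
  }
  rewrite T_cont by exact Hok.
  replace (snd (cont (INR n) 2 8)) with (fst (cont (INR n) 3 7)) by reflexivity.
  rewrite cont10_2, cont10_3.
  assert (E := f_equal (fun l => peval l (INR n)) polyid10). cbv beta in E.
  rewrite !peval_pmul, !peval_pscal, !mult_IZR in E.
  assert (H2 : 0 < peval N10_2 (INR n)) by (apply pos_shift; [vm_compute; reflexivity| auto]).
  assert (H3 : 0 < peval N10_3 (INR n)) by (apply pos_shift; [vm_compute; reflexivity| auto]).
  assert (D2 : 0 < IZR d10_2) by (apply IZR_lt; reflexivity).
  assert (D3 : 0 < IZR d10_3) by (apply IZR_lt; reflexivity).
  assert (EP : peval P10 (INR n) = peval Q10 (INR n) * (IZR d10_2 * peval N10_3 (INR n)) / (2 * IZR d10_3 * peval N10_2 (INR n))).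
  { rewrite <- E. field. split; lra. }
  unfold acoef. rewrite EP. field. repeat split; lra.
Qed.
Lemma cont11_2 x : fst (cont x 2 9) = peval N11_2 x / IZR d11_2.
Proof. cbn [cont fst snd acoef]; unfold N11_2, d11_2; cbn [peval]; field. Qed.
Lemma cont11_3 x : fst (cont x 3 8) = peval N11_3 x / IZR d11_3.
Proof. cbn [cont fst snd acoef]; unfold N11_3, d11_3; cbn [peval]; field. Qed.
Lemma cont11_4 x : fst (cont x 4 7) = peval N11_4 x / IZR d11_4.
Proof. cbn [cont fst snd acoef]; unfold N11_4, d11_4; cbn [peval]; field. Qed.
Lemma cont11_5 x : fst (cont x 5 6) = peval N11_5 x / IZR d11_5.
Proof. cbn [cont fst snd acoef]; unfold N11_5, d11_5; cbn [peval]; field. Qed.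
Lemma cont11_6 x : fst (cont x 6 5) = peval N11_6 x / IZR d11_6.
Proof. cbn [cont fst snd acoef]; unfold N11_6, d11_6; cbn [peval]; field. Qed.
Lemma cont11_7 x : fst (cont x 7 4) = peval N11_7 x / IZR d11_7.
Proof. cbn [cont fst snd acoef]; unfold N11_7, d11_7; cbn [peval]; field. Qed.
Lemma cont11_8 x : fst (cont x 8 3) = peval N11_8 x / IZR d11_8.
Proof. cbn [cont fst snd acoef]; unfold N11_8, d11_8; cbn [peval]; field. Qed.
Lemma cont11_9 x : fst (cont x 9 2) = peval N11_9 x / IZR d11_9.
Proof. cbn [cont fst snd acoef]; unfold N11_9, d11_9; cbn [peval]; field. Qed.
Lemma cont11_10 x : fst (cont x 10 1) = peval N11_10 x / IZR d11_10.
Proof. cbn [cont fst snd acoef]; unfold N11_10, d11_10; cbn [peval]; field. Qed.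
Lemma cont11_11 x : fst (cont x 11 0) = peval N11_11 x / IZR d11_11.
Proof. cbn [cont fst snd acoef]; unfold N11_11, d11_11; cbn [peval]; field. Qed.
Lemma polyid11 : pmul P11 (pscal (2 * d11_3) N11_2) = pmul Q11 (pscal d11_2 N11_3).
Proof. vm_compute; reflexivity. Qed.
Lemma Rk11_eq n : (1 <= n)%nat -> Rk 11 n = peval P11 (INR n) / peval Q11 (INR n).
Proof.
  intros Hn. assert (Hx : 1 <= INR n) by (apply (le_INR 1); auto).
  assert (HQ : 0 < peval Q11 (INR n)) by (apply pos_shift; [vm_compute; reflexivity| auto]).
  unfold Rk. replace (11 - 2)%nat with 9%nat by reflexivity.
  assert (Hok : ok (INR n) 2 9).
  { cbn [ok]. repeat split.
    - rewrite cont11_3. apply Rgt_not_eq, Rdiv_lt_0_compat; [apply pos_shift; [vm_compute; reflexivity| auto]| apply IZR_lt; reflexivity].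
    - rewrite cont11_4. apply Rgt_not_eq, Rdiv_lt_0_compat; [apply pos_shift; [vm_compute; reflexivity| auto]| apply IZR_lt; reflexivity].
    - rewrite cont11_5. apply Rgt_not_eq, Rdiv_lt_0_compat; [apply pos_shift; [vm_compute; reflexivity| auto]| apply IZR_lt; reflexivity].
    - rewrite cont11_6. apply Rgt_not_eq, Rdiv_lt_0_compat; [apply pos_shift; [vm_compute; reflexivity| auto]| apply IZR_lt; reflexivity].
    - rewrite cont11_7. apply Rgt_not_eq, Rdiv_lt_0_compat; [apply pos_shift; [vm_compute; reflexivity| auto]| apply IZR_lt; reflexivity].
    - rewrite cont11_8. apply Rgt_not_eq, Rdiv_lt_0_compat; [apply pos_shift; [vm_compute; reflexivity| auto]| apply IZR_lt; reflexivity].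
    - rewrite cont11_9. apply Rgt_not_eq, Rdiv_lt_0_compat; [apply pos_shift; [vm_compute; reflexivity| auto]| apply IZR_lt; reflexivity].
    - rewrite cont11_10. apply Rgt_not_eq, Rdiv_lt_0_compat; [apply pos_shift; [vm_compute; reflexivity| auto]| apply IZR_lt; reflexivity].
    - cbn [cont fst acoef]. intro Hc. destruct n as [|[|n]]; [lia| simpl in Hc; lra |].
      rewrite S_INR in Hc. assert (1 <= INR (S n)) by (apply (le_INR 1); lia). lra.
  }
  rewrite T_cont by exact Hok.
  replace (snd (cont (INR n) 2 9)) with (fst (cont (INR n) 3 8)) by reflexivity.
  rewrite cont11_2, cont11_3.
  assert (E := f_equal (fun l => peval l (INR n)) polyid11). cbv beta in E.
  rewrite !peval_pmul, !peval_pscal, !mult_IZR in E.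
  assert (H2 : 0 < peval N11_2 (INR n)) by (apply pos_shift; [vm_compute; reflexivity| auto]).
  assert (H3 : 0 < peval N11_3 (INR n)) by (apply pos_shift; [vm_compute; reflexivity| auto]).
  assert (D2 : 0 < IZR d11_2) by (apply IZR_lt; reflexivity).
  assert (D3 : 0 < IZR d11_3) by (apply IZR_lt; reflexivity).
  assert (EP : peval P11 (INR n) = peval Q11 (INR n) * (IZR d11_2 * peval N11_3 (INR n)) / (2 * IZR d11_3 * peval N11_2 (INR n))).
  { rewrite <- E. field. split; lra. }
  unfold acoef. rewrite EP. field. repeat split; lra.
Qed.

Lemma lim_inv_n : is_lim_seq (fun n => / INR n) 0.
Proof.
  replace (Finite 0) with (Rbar_inv p_infty) by reflexivity.
  apply is_lim_seq_inv; [apply is_lim_seq_INR| discriminate].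
Qed.

Lemma lim0_bound (u : nat -> R) M :
  (forall n, (1 <= n)%nat -> Rabs (u n) <= M * / INR n) -> is_lim_seq u 0.
Proof.
  intros H. apply is_lim_seq_incr_1.
  assert (L : is_lim_seq (fun n => M * / INR (S n)) 0).
  { replace 0 with (M * 0) by ring. apply is_lim_seq_mult'; [apply is_lim_seq_const|].
    apply (is_lim_seq_incr_1 (fun n => / INR n)), lim_inv_n. }
  apply is_lim_seq_le_le with (fun n => - (M * / INR (S n))) (fun n => M * / INR (S n)).
  - intros n. apply Rabs_le_between, H; lia.
  - replace (Finite 0) with (Rbar_opp 0) by (simpl; f_equal; ring).
    apply -> is_lim_seq_opp; exact L.
  - exact L.
Qed.

Lemma gamma_squeeze (r a b : nat -> R) :
  (forall n, (1 <= n)%nat -> r n - a n < r (S n) - a (S n)) ->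
  (forall n, (1 <= n)%nat -> r (S n) - b (S n) < r n - b n) ->
  (forall n, (1 <= n)%nat -> b n <= a n) ->
  is_lim_seq a 0 -> is_lim_seq b 0 ->
  is_lim_seq (fun n => harmonic n - ln (INR n) - r n) 0 ->
  forall n, (1 <= n)%nat -> r n - a n < euler_gamma < r n - b n.
Proof.
  intros Hu Hv Hab Ha Hb Hh.
  set (u := fun m => r (S m) - a (S m)). set (v := fun m => r (S m) - b (S m)).
  assert (Hu' : forall m, u m <= u (S m)) by (intros m; left; apply Hu; lia).
  assert (Hv' : forall m, v (S m) <= v m) by (intros m; left; apply Hv; lia).
  assert (Hv0 : forall m, v m <= v 0%nat).
  { induction m; [lra|]. specialize (Hv' m). lra. }
  assert (Huv : forall m, u m <= v m).
  { intros m; unfold u, v. assert (Hm : (1 <= S m)%nat) by lia. specialize (Hab (S m) Hm); lra. }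
  destruct (ex_finite_lim_seq_incr u (v 0%nat) Hu' (fun m => Rle_trans _ _ _ (Huv m) (Hv0 m))) as [L HL].
  apply is_lim_seq_incr_1 in Ha. apply is_lim_seq_incr_1 in Hb. apply is_lim_seq_incr_1 in Hh.
  assert (HH : is_lim_seq (fun n => harmonic n - ln (INR n)) L).
  { apply is_lim_seq_incr_1.
    pose proof (is_lim_seq_plus' _ _ _ _ (is_lim_seq_plus' _ _ _ _ HL Ha) Hh) as H.
    rewrite !Rplus_0_r in H. revert H. apply is_lim_seq_ext. intros m; unfold u; simpl; ring. }
  assert (Hg : euler_gamma = L).
  { unfold euler_gamma. rewrite (is_lim_seq_unique _ _ HH). reflexivity. }
  assert (HvL : is_lim_seq v L).
  { pose proof (is_lim_seq_minus' _ _ _ _ (is_lim_seq_plus' _ _ _ _ HL Ha) Hb) as H.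
    rewrite Rplus_0_r, Rminus_0_r in H. revert H. apply is_lim_seq_ext. intros m; unfold u, v; ring. }
  assert (Hul : forall m, u m <= L) by (apply is_lim_seq_incr_compare; auto).
  assert (Hvl : forall m, - v m <= - L).
  { apply (is_lim_seq_incr_compare (fun m => - v m)).
    - apply (is_lim_seq_opp v L). auto.
    - intros m; specialize (Hv' m); lra. }
  intros n Hn. destruct n as [|m]; [lia|].
  rewrite Hg. split.
  - destruct m as [|m'].
    + pose proof (Hu 1%nat (le_n 1)). pose proof (Hul 1%nat). unfold u in *. lra.
    + pose proof (Hu (S (S m')) ltac:(lia)). pose proof (Hul (S (S m'))). unfold u in *. lra.
  - pose proof (Hv (S m) ltac:(lia)). pose proof (Hvl (S m)). unfold v in *. lra.
Qed.

Lemma harmonic_S n : harmonic (S n) = harmonic n + / INR (S n).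
Proof. unfold harmonic. rewrite sum_n_Sm; [reflexivity| lia]. Qed.

Ltac chk := first [ (vm_compute; reflexivity) | lia ].

Lemma F11a x : 1 <= x -> 0 < Fgen P11 Q11 (IZR 20169451 / IZR 3821257440) (IZR 0) 12 x.
Proof. apply Fgen_pos; chk. Qed.
Lemma F11b x : 1 <= x -> Fgen P11 Q11 (IZR 20169451 / IZR 3821257440) (IZR 1) 12 x < 0.
Proof. apply Fgen_neg; chk. Qed.
Lemma F10a x : 1 <= x -> Fgen P10 Q10 (IZR (-2755095121) / IZR 892586949408) (IZR 0) 11 x < 0.
Proof. apply Fgen_neg; chk. Qed.
Lemma F10b x : 1 <= x -> 0 < Fgen P10 Q10 (IZR (-2755095121) / IZR 892586949408) (IZR 1) 11 x.
Proof. apply Fgen_pos; chk. Qed.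

Lemma rk11_diff n : (1 <= n)%nat -> rk 11 (S n) - rk 11 n =
  / (INR n + 1) - ln (INR n + 1) + ln (INR n) - peval (pshift P11) (INR n) / peval (pshift Q11) (INR n)
  + peval P11 (INR n) / peval Q11 (INR n).
Proof.
  intros Hn. unfold rk. rewrite harmonic_S, (Rk11_eq n Hn), (Rk11_eq (S n) ltac:(lia)), S_INR, !peval_pshift.
  replace (1 + INR n) with (INR n + 1) by ring. ring.
Qed.
Lemma rk10_diff n : (1 <= n)%nat -> rk 10 (S n) - rk 10 n =
  / (INR n + 1) - ln (INR n + 1) + ln (INR n) - peval (pshift P10) (INR n) / peval (pshift Q10) (INR n)
  + peval P10 (INR n) / peval Q10 (INR n).
Proof.
  intros Hn. unfold rk. rewrite harmonic_S, (Rk10_eq n Hn), (Rk10_eq (S n) ltac:(lia)), S_INR, !peval_pshift.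
  replace (1 + INR n) with (INR n + 1) by ring. ring.
Qed.

Lemma Rk_lim11 : is_lim_seq (fun n => harmonic n - ln (INR n) - rk 11 n) 0.
Proof.
  apply (lim0_bound _ 1). intros n Hn. unfold rk.
  replace (harmonic n - ln (INR n) - (harmonic n - ln (INR n) - Rk 11 n)) with (Rk 11 n) by ring.
  rewrite Rk11_eq by auto.
  assert (Hx : 1 <= INR n) by (apply (le_INR 1); auto).
  pose proof (rat_bound P11 Q11 (INR n) Hx ltac:(chk) ltac:(chk) ltac:(chk)).
  rewrite Rabs_right by lra. lra.
Qed.
Lemma Rk_lim10 : is_lim_seq (fun n => harmonic n - ln (INR n) - rk 10 n) 0.
Proof.
  apply (lim0_bound _ 1). intros n Hn. unfold rk.
  replace (harmonic n - ln (INR n) - (harmonic n - ln (INR n) - Rk 10 n)) with (Rk 10 n) by ring.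
  rewrite Rk10_eq by auto.
  assert (Hx : 1 <= INR n) by (apply (le_INR 1); auto).
  pose proof (rat_bound P10 Q10 (INR n) Hx ltac:(chk) ltac:(chk) ltac:(chk)).
  rewrite Rabs_right by lra. lra.
Qed.

Lemma lim_pow (c : R) (s : R) p : 0 <= s -> (1 <= p)%nat -> is_lim_seq (fun n => c * / (INR n + s) ^ p) 0.
Proof.
  intros Hs Hp. apply (lim0_bound _ (Rabs c)). intros n Hn.
  assert (Hx : 1 <= INR n) by (apply (le_INR 1); auto).
  pose proof (pinv_bound s p (INR n) Hx Hs Hp).
  rewrite Rabs_mult, (Rabs_right (/ _)) by lra.
  apply Rmult_le_compat_l; [apply Rabs_pos| lra].
Qed.

Lemma case11 n : (1 <= n)%nat ->
  rk 11 n - C11 * / INR n ^ 12 < euler_gamma < rk 11 n - C11 * / (INR n + 1) ^ 12.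
Proof.
  apply (gamma_squeeze (rk 11) (fun n => C11 * / INR n ^ 12) (fun n => C11 * / (INR n + 1) ^ 12)).
  - intros m Hm. assert (Hx : 1 <= INR m) by (apply (le_INR 1); auto).
    pose proof (rk11_diff m Hm). pose proof (F11a (INR m) Hx). unfold Fgen in H0.
    rewrite S_INR. replace (INR m + IZR 0) with (INR m) in H0 by ring.
    replace (INR m + IZR 0 + 1) with (INR m + 1) in H0 by ring.
    unfold C11. lra.
  - intros m Hm. assert (Hx : 1 <= INR m) by (apply (le_INR 1); auto).
    pose proof (rk11_diff m Hm). pose proof (F11b (INR m) Hx). unfold Fgen in H0.
    rewrite S_INR. replace (INR m + IZR 1) with (INR m + 1) in H0 by ring.
    replace (INR m + IZR 1 + 1) with (INR m + 1 + 1) in H0 by ring.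
    unfold C11. lra.
  - intros m Hm. assert (Hx : 1 <= INR m) by (apply (le_INR 1); auto).
    unfold C11. apply Rmult_le_compat_l; [lra|]. apply Rinv_le_contravar.
    + apply pow_lt; lra.
    + apply pow_incr; lra.
  - apply (is_lim_seq_ext (fun n => C11 * / (INR n + 0) ^ 12)); [intros; rewrite Rplus_0_r; auto|].
    apply lim_pow; [lra| lia].
  - apply lim_pow; [lra| lia].
  - apply Rk_lim11.
Qed.

Lemma case10 n : (1 <= n)%nat ->
  rk 10 n - - (- C10 * / (INR n + 1) ^ 11) < euler_gamma < rk 10 n - - (- C10 * / INR n ^ 11).
Proof.
  apply (gamma_squeeze (rk 10) (fun n => - (- C10 * / (INR n + 1) ^ 11)) (fun n => - (- C10 * / INR n ^ 11))).
  - intros m Hm. assert (Hx : 1 <= INR m) by (apply (le_INR 1); auto).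
    pose proof (rk10_diff m Hm). pose proof (F10b (INR m) Hx). unfold Fgen in H0.
    rewrite S_INR. replace (INR m + IZR 1) with (INR m + 1) in H0 by ring.
    replace (INR m + IZR 1 + 1) with (INR m + 1 + 1) in H0 by ring.
    unfold C10. lra.
  - intros m Hm. assert (Hx : 1 <= INR m) by (apply (le_INR 1); auto).
    pose proof (rk10_diff m Hm). pose proof (F10a (INR m) Hx). unfold Fgen in H0.
    rewrite S_INR. replace (INR m + IZR 0) with (INR m) in H0 by ring.
    replace (INR m + IZR 0 + 1) with (INR m + 1) in H0 by ring.
    unfold C10. lra.
  - intros m Hm. assert (Hx : 1 <= INR m) by (apply (le_INR 1); auto).
    assert (/ (INR m + 1) ^ 11 <= / INR m ^ 11).
    { apply Rinv_le_contravar; [apply pow_lt; lra| apply pow_incr; lra]. }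
    unfold C10. lra.
  - apply (is_lim_seq_ext (fun n => - - C10 * / (INR n + 1) ^ 11)); [intros; ring|].
    apply lim_pow; [lra| lia].
  - apply (is_lim_seq_ext (fun n => - - C10 * / (INR n + 0) ^ 11)); [intros; rewrite Rplus_0_r; ring|].
    apply lim_pow; [lra| lia].
  - apply Rk_lim10.
Qed.

Theorem theorem2 : forall n : nat, (1 <= n)%nat ->
  (- C10 * / (INR n + 1) ^ 11 < euler_gamma - rk 10 n < - C10 * / INR n ^ 11) /\
  (C11 * / (INR n + 1) ^ 12 < rk 11 n - euler_gamma < C11 * / INR n ^ 12).
Proof.
  intros n Hn. pose proof (case10 n Hn). pose proof (case11 n Hn). split; lra.
Qed.

Print Assumptions theorem2.
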